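(* Let $\mathfrak m,\mathfrak n\in\mathrm{Mult}^{\mathrm{ul}}$, and let $\Delta\in\mathfrak p_{\mathfrak m,\mathfrak n}$ and $\Delta'\in\mathfrak q_{\mathfrak m,\mathfrak n}$. Then at least one of the following holds: (i) $s(\Delta)>s(\Delta')$; (ii) $e(\Delta)>e(\Delta')$; (iii) $\mathrm{csupp}(\Delta)\cap\mathrm{csupp}(\Delta')=\emptyset$.
   Context: $F$ non-archimedean local field, $\nu=|\det(\cdot)|_F$. For cuspidal $\rho$ and reals $a,b$ with $b-a\in\mathbb Z_{\ge0}$, $[a,b]_\rho=\{\nu^a\rho,\dots,\nu^b\rho\}$, $[a,a-1]_\rho=\emptyset$, $s([a,b]_\rho)=\nu^a\rho$, $e([a,b]_\rho)=\nu^b\rho$, $\mathrm{csupp}([a,b]_\rho)$ the set $\{\nu^a\rho,\dots,\nu^b\rho\}$; for cuspidals in one line, $\nu^x\rho>\nu^y\rho$ means $x>y$. Linked: $a<a'\le b+1<b'+1$ or $a'<a\le b'+1<b+1$ (different cuspidal lines: unlinked). $\mathrm{Mult}^{\mathrm{ul}}$ (resp. $\mathrm{Mult}^{\mathrm{ul}}_\rho$): finite multisets of nonempty segments (resp. of the form $[x,y]_\rho$), pairwise unlinked. Construction. For $\mathfrak m_\rho,\mathfrak n_\rho\in\mathrm{Mult}^{\mathrm{ul}}_\rho$: $\mathfrak m_1=\mathfrak m_\rho$, $\mathfrak n_1=\mathfrak n_\rho$; at step $i$ let $\nu^{a_i}\rho$ be the minimal $s(\Delta)$, $\Delta\in\mathfrak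 m_i$, and $[a_i,b_i]_\rho$ the longest segment of $\mathfrak m_i$ beginning there; if $\{[a',b']_\rho\in\mathfrak n_i:a_i\le a'\le b_i\le b'\}\neq\emptyset$ let $[a'_i,b'_i]_\rho$ be its longest element, otherwise $[a'_i,b'_i]_\rho=\emptyset$; $\mathfrak m_{i+1}=\mathfrak m_i-[a_i,b_i]_\rho$, $\mathfrak n_{i+1}=\mathfrak n_i-[a'_i,b'_i]_\rho$; stop when $\mathfrak m_{k+1}=\emptyset$. $\mathfrak p_{\mathfrak m_\rho,\mathfrak n_\rho}=\sum_{i=1}^k[a_i,a'_i-1]_\rho$, $\mathfrak q_{\mathfrak m_\rho,\mathfrak n_\rho}=\sum_{i=1}^k[b_i+1,b'_i]_\rho+\mathfrak n_{k+1}$, with $[a_i,a'_i-1]_\rho:=[a_i,b_i]_\rho$ and $[b_i+1,b'_i]_\rho:=\emptyset$ when $[a'_i,b'_i]_\rho=\emptyset$ (empty segments omitted). For $\mathfrak m,\mathfrak n\in\mathrm{Mult}^{\mathrm{ul}}$ write $\mathfrak m=\sum_i\mathfrak m_{\rho_i}$, $\mathfrak n=\sum_i\mathfrak n_{\rho_i}$ with $\mathfrak m_{\rho_i},\mathfrak n_{\rho_i}\in\mathrm{Mult}^{\mathrm{ul}}_{\rho_i}$ (possibly empty), $\rho_i\not\cong\nu^x\rho_j$ for $i\neq j$, and put $\mathfrak p_{\mathfrak m,\mathfrak n}=\sum_i\mathfrak p_{\mathfrak m_{\rho_i},\mathfrak n_{\rho_i}}$, $\mathfrak q_{\mathfrak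 m,\mathfrak n}=\sum_i\mathfrak q_{\mathfrak m_{\rho_i},\mathfrak n_{\rho_i}}$. *)

(* Defs.v *)
From HB Require Import structures.
From mathcomp Require Import all_boot all_order all_algebra.
Set Implicit Arguments. Unset Strict Implicit. Unset Printing Implicit Defensive.
Import Order.TTheory GRing.Theory Num.Theory.
Local Open Scope ring_scope.

(* Model: a cuspidal representation is a pair (l, k) where
   l : L labels a cuspidal line {nu^k rho : k in Z} (with a fixed base point
   rho_l) and k : int is the exponent, i.e. (l,k) stands for nu^k rho_l.
   A segment [a,b]_{rho_l} is the triple (l, a, b); nonempty iff a <= b. *)

Definition cusp (L : Type) := (L * int)%type.
Definition seg (L : Type) := (L * int * int)%type.

Definition sline (L : Type) (D : seg L) : L := D.1.1.
Definition sbeg (L : Type) (D : seg L) : int := D.1.2.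
Definition send (L : Type) (D : seg L) : int := D.2.

Definition sbeg_cusp (L : Type) (D : seg L) : cusp L := (sline D, sbeg D).
Definition send_cusp (L : Type) (D : seg L) : cusp L := (sline D, send D).

Definition cusp_gt (L : eqType) (c c' : cusp L) : bool :=
  (c.1 == c'.1) && (c'.2 < c.2).

Definition csupp (L : eqType) (D : seg L) (c : cusp L) : bool :=
  (c.1 == sline D) && (sbeg D <= c.2) && (c.2 <= send D).

Definition csupp_disjoint (L : eqType) (D D' : seg L) : Prop :=
  forall c : cusp L, ~~ (csupp D c && csupp D' c).

Definition nonempty_seg (L : Type) (D : seg L) : bool := sbeg D <= send D.

Definition linked (L : eqType) (D D' : seg L) : bool :=
  (sline D == sline D') &&
  (((sbeg D < sbeg D') && (sbeg D' <= send D + 1) && (send D + 1 < send D' + 1))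
   || ((sbeg D' < sbeg D) && (sbeg D <= send D' + 1) && (send D' + 1 < send D + 1))).

(* Mult^ul : finite multisets (sequences, order irrelevant) of nonempty,
   pairwise unlinked segments *)
Definition mult_ul (L : eqType) (m : seq (seg L)) : bool :=
  all (@nonempty_seg L) m && all (fun D => all (fun D' => ~~ linked D D') m) m.

Fixpoint best (T : Type) (better : T -> T -> bool) (x : T) (s : seq T) : T :=
  match s with
  | [::] => x
  | y :: s' => best better (if better y x then y else x) s'
  end.

Definition better_m (y x : int * int) : bool :=
  (y.1 < x.1) || ((y.1 == x.1) && (x.2 < y.2)).

Definition better_n (y x : int * int) : bool := x.2 - x.1 < y.2 - y.1.

Definition seg_if (a b : int) : seq (int * int) :=
  if a <= b then [:: (a, b)] else [::].

(* returns (p, q) ; fuel = size m suffices *)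
Fixpoint pq_line (fuel : nat) (m n : seq (int * int))
  : seq (int * int) * seq (int * int) :=
  match fuel with
  | O => ([::], n)
  | S f =>
    match m with
    | [::] => ([::], n)
    | D0 :: m0 =>
      let D := best better_m D0 m0 in
      let a := D.1 in let b := D.2 in
      let c := [seq D' <- n | (a <= D'.1) && (D'.1 <= b) && (b <= D'.2)] in
      match c with
      | [::] =>
        let r := pq_line f (rem D m) n in
        ((a, b) :: r.1, r.2)
      | C0 :: c0 =>
        let D' := best better_n C0 c0 in
        let r := pq_line f (rem D m) (rem D' n) in
        (seg_if a (D'.1 - 1) ++ r.1, seg_if (b + 1) D'.2 ++ r.2)
      end
    end
  end.

Definition on_line (L : eqType) (l : L) (m : seq (seg L)) : seq (int * int) :=
  [seq (sbeg D, send D) | D <- m & sline D == l].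

Definition lines_of (L : eqType) (m n : seq (seg L)) : seq L :=
  undup [seq sline D | D <- m ++ n].

Definition tag_line (L : Type) (l : L) (s : seq (int * int)) : seq (seg L) :=
  [seq (l, x.1, x.2) | x <- s].

Definition pq_l (L : eqType) (l : L) (m n : seq (seg L)) :=
  pq_line (size (on_line l m)) (on_line l m) (on_line l n).

Definition p_mn (L : eqType) (m n : seq (seg L)) : seq (seg L) :=
  flatten [seq tag_line l (pq_l l m n).1 | l <- lines_of m n].
Definition q_mn (L : eqType) (m n : seq (seg L)) : seq (seg L) :=
  flatten [seq tag_line l (pq_l l m n).2 | l <- lines_of m n].

(* Main.v *)
Require Import Defs.
From mathcomp Require Import all_boot all_order all_algebra.
From mathcomp Require Import zify.
Set Implicit Arguments. Unset Strict Implicit. Unset Printing Implicit Defensive.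
Import Order.TTheory GRing.Theory Num.Theory.
Local Open Scope ring_scope.

Definition lkp (x y : int * int) : bool :=
  ((x.1 < y.1) && (y.1 <= x.2 + 1) && (x.2 + 1 < y.2 + 1)) ||
  ((y.1 < x.1) && (x.1 <= y.2 + 1) && (y.2 + 1 < x.2 + 1)).

Definition ulp (s : seq (int * int)) :=
  forall x y, x \in s -> y \in s -> ~~ lkp x y.

Lemma ulp_rem s z : ulp s -> ulp (rem z s).
Proof. by move=> h x y /mem_rem hx /mem_rem hy; apply: h. Qed.

Lemma best_spec (T : eqType) (better : rel T) :
  transitive better -> irreflexive better ->
  forall s x, [/\ best better x s \in x :: s,
    (best better x s == x) || better (best better x s) x &
    forall y, y \in x :: s -> ~~ better y (best better x s)].
Proof.
move=> tr irr; elim=> [|z s IH] x /=.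
  split; [exact: mem_head | by rewrite eqxx | ].
  by move=> y; rewrite inE => /eqP ->; rewrite irr.
case bzx: (better z x); [case: (IH z) | case: (IH x)] => h1 h2 h3.
  split.
  - by move: h1; rewrite !inE => /orP [->|->]; rewrite ?orbT.
  - apply/orP; right; case/orP: h2 => [/eqP ->//|h]; exact: tr h bzx.
  - move=> y; rewrite !inE => /orP [/eqP ->|/orP [/eqP ->|ys]].
    + apply/negP => hb; case/orP: h2 => [/eqP e|h].
        by rewrite e in hb; move: (tr _ _ _ hb bzx); rewrite irr.
      by move: (tr _ _ _ (tr _ _ _ hb h) bzx); rewrite irr.
    + exact: h3 (mem_head _ _).
    + by apply: h3; rewrite inE ys orbT.
split.
- by move: h1; rewrite !inE => /orP [->|->]; rewrite ?orbT.
- done.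
- move=> y; rewrite !inE => /orP [/eqP ->|/orP [/eqP ->|ys]].
  + exact: h3 (mem_head _ _).
  + apply/negP => hb; case/orP: h2 => [/eqP e|h].
      by rewrite e bzx in hb.
    by rewrite (tr _ _ _ hb h) in bzx.
  + by apply: h3; rewrite inE ys orbT.
Qed.

Lemma bm_tr : transitive better_m.
Proof.
move=> y x z; rewrite /better_m => /orP [h|/andP [/eqP e h]] /orP [h'|/andP [/eqP e' h']];
  apply/orP; (try by left; lia); right; apply/andP; split; (try (apply/eqP; lia)); lia.
Qed.
Lemma bm_irr : irreflexive better_m.
Proof. by move=> x; rewrite /better_m !ltxx andbF. Qed.
Lemma bn_tr : transitive better_n.
Proof. move=> y x z; rewrite /better_n; lia. Qed.
Lemma bn_irr : irreflexive better_n.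
Proof. by move=> x; rewrite /better_n ltxx. Qed.

Lemma pA f m n P : P \in (pq_line f m n).1 ->
  exists2 M, M \in m & (M.1 == P.1) && (P.2 <= M.2).
Proof.
elim: f m n => [|f IH] [|D0 m0] n //; cbn [pq_line].
have [hD hD2 hD3] := best_spec bm_tr bm_irr m0 D0.
set D := best better_m D0 m0 in hD hD2 hD3 *.
case Ec: filter => [|C0 c0]; cbn [fst snd].
  rewrite inE => /orP [/eqP ->|/IH [M /mem_rem hM h]]; last by exists M.
  by exists D => //; rewrite eqxx lexx.
have [hC _ _] := best_spec bn_tr bn_irr c0 C0.
rewrite -Ec mem_filter in hC; case/andP: hC => /andP [/andP [h1 h2] h3] _.
rewrite mem_cat /seg_if; case: ifP => hh.
  rewrite inE => /orP [/eqP ->|/IH [M /mem_rem hM h]]; last by exists M.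
  exists D => //=; rewrite eqxx /=. move: h2 hh. clear. set u := (best _ _ _).1. lia.
by move=> /IH [M /mem_rem hM h]; exists M.
Qed.

Lemma pB f m n Q : Q \in (pq_line f m n).2 ->
  exists N, [/\ N \in n, N.2 = Q.2 &
     (N = Q \/ exists2 M, M \in m & (M.1 <= N.1) && (N.1 < Q.1))].
Proof.
elim: f m n => [|f IH] [|D0 m0] n; cbn [pq_line fst snd];
  try by move=> h; exists Q; split => //; left.
have [hD hD2 hD3] := best_spec bm_tr bm_irr m0 D0.
set D := best better_m D0 m0 in hD hD2 hD3 *.
case Ec: filter => [|C0 c0]; cbn [fst snd].
  move=> /IH [N [hN e H]]; exists N; split => //.
  by case: H => [->|[M /mem_rem hM h]]; [left | right; exists M].
have [hC _ _] := best_spec bn_tr bn_irr c0 C0.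
set D' := best better_n C0 c0 in hC *.
rewrite -Ec mem_filter in hC; case/andP: hC => /andP [/andP [h1 h2] h3] hC.
rewrite mem_cat /seg_if; case: ifP => hh.
  rewrite inE => /orP [/eqP ->|].
    exists D'; split => //; right; exists D => //=.
    move: h1 h2; clear; set u := D'.1; set v := D.1; set w := D.2; lia.
  move=> /IH [N [/mem_rem hN e H]]; exists N; split => //.
  by case: H => [->|[M /mem_rem hM h]]; [left | right; exists M].
move=> /IH [N [/mem_rem hN e H]]; exists N; split => //.
by case: H => [->|[M /mem_rem hM h]]; [left | right; exists M].
Qed.

Lemma key_arith (D D' N : int * int) : ~~ lkp N D' ->
  (D.2 <= N.2 -> ~~ better_n N D') -> D.1 <= D'.1 -> D'.1 <= D.2 -> D.2 <= D'.2 ->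
  D.1 <= N.1 -> N.1 <= D'.1 - 1 -> D'.1 - 1 <= N.2 -> False.
Proof.
case: D D' N => [a b] [a' b'] [c d]; rewrite /lkp /better_n /= => hl hb *.
case: (leP b d) => hbd; first by move: (hb hbd) hl; lia.
by move: hl; lia.
Qed.

Lemma rec_arith (D M P : int * int) : ~~ lkp D M -> ~~ better_m M D ->
  M.1 = P.1 -> P.2 <= M.2 -> P.1 <= D.2 + 1 -> D.2 + 1 <= P.2 -> False.
Proof.
case: D M P => [a b] [a' b'] [c d]; rewrite /lkp /better_m /= => hl hb e *.
by move: hl hb; rewrite e; lia.
Qed.

Lemma unm_arith (D N Q : int * int) (M : int * int) :
  ~~ better_m M D -> M.1 <= N.1 -> N.1 < Q.1 -> N.2 = Q.2 ->
  D.1 <= Q.1 -> Q.1 <= D.2 -> D.2 <= Q.2 ->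
  [&& D.1 <= N.1, N.1 <= D.2 & D.2 <= N.2].
Proof.
case: D N Q M => [a b] [a' b'] [c d] [x y]; rewrite /better_m /= => hb *.
by move: hb; lia.
Qed.

Lemma m_arith (D N Q M D' : int * int) :
  ~~ better_m M D -> M.1 <= N.1 -> N.1 < Q.1 -> N.2 = Q.2 ->
  D.1 <= Q.1 -> Q.1 <= D'.1 - 1 -> D'.1 - 1 <= Q.2 ->
  [&& D.1 <= N.1, N.1 <= D'.1 - 1 & D'.1 - 1 <= N.2].
Proof.
case: D N Q M D' => [a b] [a' b'] [c d] [x y] [u v]; rewrite /better_m /= => hb *.
by move: hb; lia.
Qed.

Lemma pq_main f m n : ulp m -> ulp n -> forall P Q,
  P \in (pq_line f m n).1 -> Q \in (pq_line f m n).2 ->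
  ~~ [&& P.1 <= Q.1, Q.1 <= P.2 & P.2 <= Q.2].
Proof.
elim: f m n => [|f IH] [|D0 m0] n; cbn [pq_line fst snd] => // um un P Q.
have [hD hD2 hD3] := best_spec bm_tr bm_irr m0 D0.
set D := best better_m D0 m0 in hD hD2 hD3 *.
have um' := @ulp_rem _ D um.
case Ec: filter => [|C0 c0]; cbn [fst snd].
  have hnone : forall N, N \in n -> ~~ [&& D.1 <= N.1, N.1 <= D.2 & D.2 <= N.2].
    move=> N hN; apply/negP => hp.
    move: (f_equal (fun s => N \in s) Ec); rewrite mem_filter hN andbT in_nil /=.
    by move/and3P: hp => [-> -> ->].
  rewrite inE => /orP [/eqP ->|hP] hQ; last exact: IH hP hQ.
  apply/negP => /and3P [q1 q2 q3].
  have [N [hN e [E|[M /mem_rem hM /andP [h1 h2]]]]] := pB hQ.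
    by rewrite -E in q1 q2 q3; move: (hnone N hN); rewrite q1 q2 q3.
  move: (hnone N hN); rewrite (unm_arith (hD3 M hM) h1 h2 e q1 q2 q3) //.
have [hC _ hCmax] := best_spec bn_tr bn_irr c0 C0.
set D' := best better_n C0 c0 in hC hCmax *.
rewrite -Ec in hCmax.
have hCf := hC; rewrite -Ec mem_filter in hC; case/andP: hC => /andP [/andP [h1 h2] h3] hC.
have un' := @ulp_rem _ D' un.
have key : forall N, N \in n -> ~~ [&& D.1 <= N.1, N.1 <= D'.1 - 1 & D'.1 - 1 <= N.2].
  move=> N hN; apply/negP => /and3P [k1 k2 k3].
  apply: (key_arith (un N D' hN hC) _ h1 h2 h3 k1 k2 k3) => hd.
  apply: hCmax; rewrite mem_filter hN andbT hd k1 andbT /=.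
  move: k2 h2; clear; set u := D'.1; set v := N.1; set w := D.2; lia.
rewrite !mem_cat /seg_if.
case/orP => [hP|hP] /orP [hQ|hQ].
- move: hP hQ; case: ifP => // _; case: ifP => // _; rewrite !inE => /eqP -> /eqP -> /=.
  move: h2; clear; set u := D'.1; set w := D.2; set z := D'.2; lia.
- move: hP; case: ifP => // _; rewrite inE => /eqP ->; cbn [fst snd].
  apply/negP => /and3P [q1 q2 q3].
  have [N [hN e [E|[M /mem_rem hM /andP [k1 k2]]]]] := pB hQ.
    by rewrite -E in q1 q2 q3; move: (key N (mem_rem hN)); rewrite q1 q2 q3.
  move: (key N (mem_rem hN)); rewrite (m_arith (hD3 M hM) k1 k2 e q1 q2 q3) //.
- move: hQ; case: ifP => // _; rewrite inE => /eqP ->; cbn [fst snd].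
  apply/negP => /and3P [q1 q2 q3].
  have [M /mem_rem hM /andP [/eqP k1 k2]] := pA hP.
  exact: (rec_arith (um D M hD hM) (hD3 M hM) k1 k2 q1 q2).
- exact: IH um' un' P Q hP hQ.
Qed.

Lemma ul_line (L : eqType) (m : seq (seg L)) l : mult_ul m -> ulp (on_line l m).
Proof.
case/andP=> _ /allP hm x y /mapP [X] + -> /mapP [Y] + ->.
rewrite !mem_filter => /andP [/eqP eX hX] /andP [/eqP eY hY].
move: (allP (hm X hX) Y hY); rewrite /linked eX eY eqxx /=.
by rewrite /lkp /=.
Qed.

Lemma in_pq (L : eqType) (s : seq L) (F : L -> seq (int * int)) (D : seg L) :
  D \in flatten [seq tag_line l (F l) | l <- s] ->
  exists l, exists2 x, x \in F l & D = (l, x.1, x.2).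
Proof.
case/flatten_mapP => l _ /mapP [x hx ->]; by exists l, x.
Qed.

Lemma fin_arith (x y : int * int) (c : int) :
  ~~ [&& x.1 <= y.1, y.1 <= x.2 & x.2 <= y.2] -> ~~ (y.1 < x.1) ->
  ~~ (y.2 < x.2) -> c <= x.2 -> y.1 <= c -> False.
Proof. case: x y => [a b] [a' b'] /=; lia. Qed.

Theorem lemma5p2 (L : eqType) (m n : seq (seg L)) (D D' : seg L) :
  mult_ul m -> mult_ul n ->
  D \in p_mn m n -> D' \in q_mn m n ->
  [\/ cusp_gt (sbeg_cusp D) (sbeg_cusp D'),
      cusp_gt (send_cusp D) (send_cusp D')
    | csupp_disjoint D D'].
Proof.
move=> hm hn /in_pq [l [x hx ->]] /in_pq [l' [y hy ->]].
case: (eqVneq l l') => [el|nel].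
  subst l'.
  have := pq_main (ul_line (l:=l) hm) (ul_line (l:=l) hn) hx hy.
  case h1: (y.1 < x.1).
    by move=> _; apply: Or31; rewrite /cusp_gt /= eqxx.
  case h2: (y.2 < x.2).
    by move=> _; apply: Or32; rewrite /cusp_gt /= eqxx.
  move=> h3.
  apply: Or33 => c; rewrite /csupp /=; apply/negP.
  case/andP => /andP [/andP [_ c1] c2] /andP [/andP [_ c3] c4].
  exact: (fin_arith h3 (negbT h1) (negbT h2) c2 c3).
apply: Or33 => c; rewrite /csupp /=; apply/negP.
case/andP => /andP [/andP [/eqP e1 _] _] /andP [/andP [/eqP e2 _] _].
by move: e1 e2 nel; rewrite /sline /= => -> ->; rewrite eqxx.
Qed.
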